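(* Let $q$ be a prime power, $n\ge1$, let $f(x)\in\mathbb{F}_{q^n}[x]$ be a permutation polynomial of $\mathbb{F}_{q^n}$, and let $h_1,\dots,h_n\in\mathbb{F}_q[x]$. For $a_1,\dots,a_n,v_1,\dots,v_n\in\mathbb{F}_{q^n}$, the polynomial $$F(x)=a_1h_1(\mathrm{Tr}(v_1f(x)))+\dots+a_nh_n(\mathrm{Tr}(v_nf(x)))$$ is a permutation polynomial of $\mathbb{F}_{q^n}$ if and only if (i) both $\{a_1,\dots,a_n\}$ and $\{v_1,\dots,v_n\}$ are bases of $\mathbb{F}_{q^n}$ over $\mathbb{F}_q$, and (ii) each $h_i$, $1\le i\le n$, is a permutation polynomial of $\mathbb{F}_q$.
   Context: $\mathrm{Tr}(x)=x+x^q+\dots+x^{q^{n-1}}$ is the trace from $\mathbb{F}_{q^n}$ to $\mathbb{F}_q$. A polynomial is a permutation polynomial of a finite field if the map it induces on that field is bijective. *)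

(* Defs.v *)
From HB Require Import structures.
From mathcomp Require Import all_boot all_order all_algebra all_field.
Set Implicit Arguments. Unset Strict Implicit. Unset Printing Implicit Defensive.
Import GRing.Theory.
Local Open Scope ring_scope.

Definition is_pp (R : nzRingType) (p : {poly R}) : Prop :=
  bijective (fun x : R => p.[x]).

(* Trace Tr(y) = y + y^q + ... + y^(q^(n-1)) with q = #|F|, applied formally
   to a polynomial argument (so Tr(v f(x)) is a polynomial in x). *)
Definition trP (F : finFieldType) (L : fieldExtType F) (n : nat)
    (p : {poly L}) : {poly L} :=
  \sum_(i < n) p ^+ (#|F| ^ i)%N.

Definition bigF (F : finFieldType) (L : fieldExtType F) (n : nat)
    (f : {poly L}) (h : 'I_n -> {poly F}) (a v : 'I_n -> L) : {poly L} :=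
  \sum_(i < n) a i *: (map_poly (in_alg L) (h i) \Po trP n (v i *: f)).

(* Main.v *)
Require Import Defs.
From HB Require Import structures.
From mathcomp Require Import all_boot all_order all_algebra all_field.
Set Implicit Arguments. Unset Strict Implicit. Unset Printing Implicit Defensive.
Import GRing.Theory.
Local Open Scope ring_scope.

Section Aux.
Variables (F : finFieldType) (L : fieldExtType F).
Local Notation q := #|F|.

Lemma frobD k (x y : L) : (x + y) ^+ (q ^ k) = x ^+ (q ^ k) + y ^+ (q ^ k).
Proof.
have [p _ pcharFp] := finPcharP F.
have pL : p \in [pchar L] by rewrite (pchar_lalg L).
rewrite (card_pprimeChar pcharFp) -expnM.
elim: (_ * k)%N => [|e IH]; first by rewrite !expr1.
by rewrite expnSr !exprM IH -!(pFrobenius_autE pL) pFrobenius_autD_comm //; apply: mulrC.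
Qed.

Lemma frobA k (c : F) : (c%:A : L) ^+ (q ^ k) = c%:A.
Proof.
elim: k => [|k IH]; first by rewrite expr1.
rewrite expnSr exprM IH.
have := Fermat's_little_theorem (1%AS : {subfield L}) c%:A.
by rewrite rpredZ ?mem1v // dimv1 expn1 => /esym/eqP.
Qed.

Lemma frob_fullv (x : L) : x ^+ (q ^ \dim {:L}) = x.
Proof.
have := Fermat's_little_theorem (fullv : {subfield L}) x.
by rewrite memvf => /esym/eqP.
Qed.

Lemma frob_in1 (x : L) : x ^+ q = x -> x \in 1%VS.
Proof.
move=> h; rewrite (Fermat's_little_theorem (1%AS : {subfield L})) dimv1 expn1 h //.
Qed.

Definition Tr (x : L) : L := \sum_(i < \dim {:L}) x ^+ (q ^ i).

Lemma TrD x y : Tr (x + y) = Tr x + Tr y.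
Proof. by rewrite /Tr -big_split; apply: eq_bigr => i _; rewrite frobD. Qed.

Lemma TrZ (c : F) x : Tr (c%:A * x) = c%:A * Tr x.
Proof. by rewrite /Tr mulr_sumr; apply: eq_bigr => i _; rewrite exprMn frobA. Qed.

Lemma frob_sum (I : Type) (r : seq I) (G : I -> L) :
  (\sum_(i <- r) G i) ^+ q = \sum_(i <- r) G i ^+ q.
Proof.
elim: r => [|i r IH]; first by rewrite !big_nil expr0n; have := finNzRing_gt1 F; case: q.
by rewrite !big_cons -IH -(expn1 q) frobD.
Qed.

Lemma Tr_in x : Tr x \in 1%VS.
Proof.
apply: frob_in1; rewrite /Tr frob_sum.
have dpos := adim_gt0 (fullv : {subfield L}).
case: (\dim {:L}) (frob_fullv x) dpos => // m fx _.
under eq_bigr => i _ do rewrite -exprM -expnSr.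
rewrite big_ord_recr big_ord_recl /= fx expn0 expr1 addrC.
by congr (_ + _); apply: eq_bigr => i _.
Qed.

Local Notation K := (finvect_type L).

Lemma cardK : #|K| = (q ^ \dim {:L})%N.
Proof. have := @card_vspacef F K (Vector.class K). by move=> <-; rewrite card_vspace. Qed.

Lemma q_gt1 : (1 < q)%N.
Proof. exact: finNzRing_gt1. Qed.

Definition TrP : {poly L} := \sum_(i < \dim {:L}) 'X^(q ^ i).

Lemma TrP_size m : size (\sum_(i < m.+1) 'X^(q ^ i) : {poly L}) = (q ^ m).+1.
Proof.
elim: m => [|m IH]; first by rewrite big_ord1 expn0 size_polyXn.
rewrite big_ord_recr /= addrC size_polyDl ?size_polyXn // IH ltnS ltn_exp2l //.
exact: q_gt1.
Qed.

Lemma TrPE x : TrP.[x] = Tr x.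
Proof. by rewrite /TrP horner_sum; apply: eq_bigr => i _; rewrite hornerXn. Qed.

Lemma Tr_nz : exists z : L, Tr z != 0.
Proof.
case: (pickP (fun z : K => Tr z != 0)) => [z hz | h]; first by exists z.
exfalso.
have dpos := adim_gt0 (fullv : {subfield L}).
have := frob_fullv (0 : L); move: dpos.
rewrite /TrP; case E: (\dim {:L}) => [//|m] _ _.
have P0 : TrP != 0.
  by rewrite -size_poly_eq0 /TrP E TrP_size.
have := @max_poly_roots _ TrP (enum K) P0.
rewrite (enum_uniq K).
have -> : all (root TrP) (enum K).
  by apply/allP => z _; rewrite rootE TrPE; exact: negbFE (h z).
move=> /(_ isT isT); rewrite /TrP E TrP_size (_ : size (enum K) = #|K|); last by rewrite cardE.
rewrite cardK E ltnS leqNgt.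
by rewrite ltn_exp2l ?ltnSn //; exact: q_gt1.
Qed.

Lemma alg_inj (c d : F) : c%:A = d%:A :> L -> c = d.
Proof.
move=> /eqP; rewrite -subr_eq0 -scalerBl scaler_eq0 oner_eq0 orbF subr_eq0.
by move/eqP.
Qed.

Definition trF (x : L) : F := odflt 0 [pick c | c%:A == Tr x].

Lemma trFE x : (trF x)%:A = Tr x.
Proof.
rewrite /trF; case: pickP => [c /eqP //| H].
have /vlineP [c hc] := Tr_in x.
by move: (H c); rewrite hc eqxx.
Qed.

Lemma trFD x y : trF (x + y) = trF x + trF y.
Proof. by apply: alg_inj; rewrite scalerDl !trFE TrD. Qed.

Lemma trF0 : trF 0 = 0.
Proof. by have := trFD 0 0; rewrite addr0 => /(congr1 (fun t => t - trF 0)); rewrite subrr addrK. Qed.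

Lemma trFZ (c : F) x : trF (c *: x) = c * trF x.
Proof. by apply: alg_inj; rewrite trFE -[c *: x]mulr_algl TrZ -trFE mulr_algl scalerA. Qed.

Lemma trF_sum (I : Type) (r : seq I) (G : I -> L) :
  trF (\sum_(i <- r) G i) = \sum_(i <- r) trF (G i).
Proof. exact: (big_morph trF trFD trF0). Qed.

Lemma trF_nz (y : L) : y != 0 -> exists w : L, trF (w * y) != 0.
Proof.
move=> y0; have [z hz] := Tr_nz.
exists (z / y); rewrite mulfVK //; apply: contra hz => /eqP h.
by rewrite -trFE h scale0r.
Qed.

Lemma trFN x : trF (- x) = - trF x.
Proof. by rewrite -scaleN1r trFZ mulN1r. Qed.
End Aux.

Lemma comp3 (X Y : finType) (T : X -> Y) (H : Y -> Y) (A : Y -> X) :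
  #|X| = #|Y| ->
  bijective (fun x => A (H (T x))) <-> [/\ bijective T, bijective H & bijective A].
Proof.
move=> cXY; split; last first.
  by case=> bT bH bA; apply: bij_comp bA (bij_comp bH bT).
case=> g gK Kg.
have injT : injective T by move=> x y e; rewrite -(gK x) -(gK y) /= e.
have bT : bijective T by apply: inj_card_bij injT _; rewrite cXY.
pose r y := H (T (g y)).
have rK : cancel r A by move=> y; rewrite /r Kg.
have [r' rr' r'r] : bijective r by apply: inj_card_bij (can_inj rK) _; rewrite cXY.
have bA : bijective A.
  apply: (@eq_bij _ _ r'); first by exists r.
  by move=> y; rewrite -{2}(r'r y) rK.
case: (bT) => Ti TK KT; case: (bA) => Ai AK KA.
split=> //.
apply: (@eq_bij _ _ (fun y => Ai (A (H (T (Ti y)))))).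
  have bG : bijective (fun x => A (H (T x))) := Bijective gK Kg.
  have bAi : bijective Ai by exists A.
  have bTi : bijective Ti by exists T.
  exact: bij_comp bAi (bij_comp bG bTi).
by move=> y; rewrite KT AK.
Qed.

Lemma basis_tupleE (F : finFieldType) (L : fieldExtType F) n (hn : \dim {:L} = n)
   (w : 'I_n -> L) :
  basis_of fullv [seq w i | i <- enum 'I_n] = free [tuple w i | i < n].
Proof.
have -> : [seq w i | i <- enum 'I_n] = [tuple w i | i < n] :> seq L.
  by [].
rewrite basisEfree subvf size_tuple hn leqnn /=. by case: free.
Qed.

Lemma tuple_nth (L : zmodType) n (w : 'I_n -> L) (i : 'I_n) :
  [tuple w i | i < n]`_i = w i.
Proof. by rewrite -tnth_nth tnth_mktuple. Qed.

Section Main.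
Variables (F : finFieldType) (L : fieldExtType F) (n : nat).
Hypothesis hn : \dim {:L} = n.
Local Notation K := (finvect_type L).
Local Notation V := {ffun 'I_n -> F}.

Lemma cardV : #|V| = (#|F| ^ n)%N.
Proof. by rewrite card_ffun card_ord. Qed.

Lemma cardKn : #|K| = #|V|.
Proof. by rewrite cardV cardK hn. Qed.

Definition Am (a : 'I_n -> L) (u : V) : K := \sum_i u i *: a i.

Lemma Am_bij a : bijective (Am a) <-> free [tuple a i | i < n].
Proof.
split.
  case=> Ai AK KA; apply/freeP => k hk i.
  have : Am a [ffun i => k i] = Am a [ffun => 0].
    have -> : Am a [ffun => 0] = 0.
      by rewrite /Am big1 // => j _; rewrite ffunE scale0r.
    by rewrite -hk; apply: eq_bigr => j _; rewrite ffunE tuple_nth.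
  move=> /(congr1 Ai); rewrite !AK => /ffunP /(_ i); rewrite !ffunE //.
move=> /freeP hfree; apply: inj_card_bij; last by rewrite cardKn.
move=> u u' e; apply/ffunP => i; apply/eqP; rewrite -subr_eq0; apply/eqP.
move: i; apply: (hfree (fun i => u i - u' i)).
under eq_bigr => i _ do rewrite tuple_nth scalerBl.
by rewrite sumrB; apply/eqP; rewrite subr_eq0; apply/eqP.
Qed.


Definition Tm (v : 'I_n -> L) (y : K) : V := [ffun i => trF (v i * y)].

Lemma Tm_bij v : bijective (Tm v) <-> free [tuple v i | i < n].
Proof.
split.
  case=> Ti TK KT; apply/freeP => k hk j.
  pose e : V := [ffun l => (l == j)%:R].
  have := congr1 (fun z => trF (z * Ti e)) hk.
  rewrite /= mul0r trF0 mulr_suml trF_sum.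
  under eq_bigr => i _ do rewrite tuple_nth -scalerAl trFZ.
  have he i : trF (v i * Ti e) = (i == j)%:R.
    by have := congr1 (fun u : V => u i) (KT e); rewrite /= /e !ffunE.
  under eq_bigr => i _ do rewrite [trF _]he.
  rewrite (bigD1 j) //= eqxx mulr1 big1 ?addr0 // => i /negPf ->.
  by rewrite mulr0.
move=> fr; apply: inj_card_bij; last by rewrite cardKn.
have bas : basis_of fullv [tuple v i | i < n].
  by rewrite basisEfree fr subvf size_tuple hn leqnn.
move=> y y' e; apply/eqP; rewrite -subr_eq0; apply/negPn/negP => d0.
have [w hw] := trF_nz d0.
have hz i : trF (v i * (y - y')) = 0.
  have := congr1 (fun u : V => u i) e; rewrite /= /Tm !ffunE => exy.
  by rewrite mulrBr trFD trFN [trF (v i * y)]exy subrr.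
have wsp : w \in <<[tuple v i | i < n]>>%VS by rewrite (span_basis bas) memvf.
move: hw; rewrite (coord_span wsp) mulr_suml trF_sum big1 ?eqxx //.
by move=> i _; rewrite -scalerAl trFZ tuple_nth [trF _]hz mulr0.
Qed.

Definition Hm (h : 'I_n -> {poly F}) (u : V) : V := [ffun i => (h i).[u i]].

Lemma Hm_bij h : bijective (Hm h) <-> (forall i, is_pp (h i)).
Proof.
split.
  case=> Hi HK KH i; apply: injF_bij => x y exy.
  pose u z : V := [ffun l => if l == i then z else 0].
  have : Hm h (u x) = Hm h (u y).
    apply/ffunP => l; rewrite !ffunE; case: eqP => // -> //.
  move=> /(congr1 Hi); rewrite !HK => /ffunP /(_ i); rewrite !ffunE eqxx //.
move=> hb; apply: injF_bij => u u' e; apply/ffunP => i.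
have := congr1 (fun z : V => z i) e; rewrite /= !ffunE.
by move/(bij_inj (hb i)).
Qed.
End Main.

Theorem theorem2p1 (F : finFieldType) (L : fieldExtType F) (n : nat)
    (hn : \dim {:L} = n) (f : {poly L}) (hf : is_pp f)
    (h : 'I_n -> {poly F}) (a v : 'I_n -> L) :
  is_pp (bigF f h a v) <->
  ((basis_of fullv [seq a i | i <- enum 'I_n] /\
    basis_of fullv [seq v i | i <- enum 'I_n]) /\
   (forall i : 'I_n, is_pp (h i))).
Proof.
pose G := fun y : finvect_type L => Am a (Hm h (Tm v y)).
have key : forall y : L, (bigF f h a v).[y] = G (f.[y]).
  move=> y; rewrite /bigF horner_sum /G /Am; apply: eq_bigr => i _.
  rewrite hornerZ horner_comp.
  have -> : (trP n (v i *: f)).[y] = ((trF (v i * f.[y]))%:A : L).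
    rewrite trFE /Tr hn /trP horner_sum; apply: eq_bigr => j _.
    by rewrite horner_exp hornerZ.
  rewrite -[(trF _)%:A]/(in_alg L (trF _)) horner_map !ffunE /=.
  by rewrite mulr_algr.
have e1 : is_pp (bigF f h a v) <-> bijective G.
  rewrite /is_pp; split => hb.
    case: hf => fi fK Kf.
    apply: (@eq_bij _ _ (fun y => (bigF f h a v).[fi y])).
      exact: bij_comp hb (Bijective Kf fK).
    by move=> y; rewrite key Kf.
  apply: (@eq_bij _ _ (G \o (fun x => f.[x]))); first exact: bij_comp hb hf.
  by move=> y; rewrite /= key.
apply: (iff_trans e1); apply: (iff_trans (comp3 _ _ _ (cardKn hn))).
have hT := Tm_bij hn v; have hH := Hm_bij h; have hA := Am_bij hn a.
rewrite -(basis_tupleE hn) in hT; rewrite -(basis_tupleE hn) in hA.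
split; first by case=> /hT bt /hH bh /hA ba.
by case=> [[ba bt] bh]; split; [exact/hT | exact/hH | exact/hA].
Qed.
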